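(* Let $I=(a_1,\dots,a_n)\in(0,1]^n$ be a sorted item sequence, and let $I_1$ be the subsequence of $I$ consisting of the items that are sole class-1 items in the assignment $f$ produced by $MM_2$ on $I$. Then for every assignment $g$ of $I$ without cardinality constraints there exists an assignment $g'$ of $I$ without cardinality constraints such that $g$ and $g'$ use the same number of non-empty bins and every item of $I_1$ is a sole item in $g'$.
   Context: An item sequence $I=(a_1,\dots,a_n)\in(0,1]^n$ is sorted if $a_1\ge\cdots\ge a_n$. An assignment without cardinality constraints is a map $g:\{1,\dots,n\}\to\mathbb{N}$ with $\sum_{i:g(i)=j}a_i\le1$ for each bin $j$; $|g(I)|$ denotes its number of non-empty bins. A class-1 item is an item of size in $(\frac12,1]$; an item is sole if its bin contains no other item. Algorithm $MM_k$: sort the items in non-increasing order (an already sorted input is left unchanged); keep a single open bin with load $S$. Repeat while items remain: if the open bin already contains $k$ items, close it and open a new bin; else if the head (largest remaining) item fits ($S+\text{head}\le1$) pack it; else if the tail (smallest remaining) item fits pack it; else close the open bin permanently and open a new empty bin. $MM_2$ is the case $k=2$. *)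

(* Defs.v *)
From HB Require Import structures.
From mathcomp Require Import all_boot all_order all_algebra.
Set Implicit Arguments. Unset Strict Implicit. Unset Printing Implicit Defensive.
Import Order.TTheory GRing.Theory Num.Theory.
Local Open Scope ring_scope.

(* An item sequence I = (a_1,...,a_n) is a list s : seq R; item i (0-based,
   i < size s) has size nth 0 s i.  Items are identified by their index. *)

Definition items_ok {R : realFieldType} (s : seq R) : bool :=
  all (fun x => (0 < x) && (x <= 1)) s.

Definition sorted_items {R : realFieldType} (s : seq R) : bool :=
  sorted (fun x y => y <= x) s.

Definition is_assignment {R : realFieldType} (s : seq R) (g : nat -> nat) : Prop :=
  forall j : nat, \sum_(i < size s | g i == j) nth 0 s i <= 1.

Definition nbins {R : realFieldType} (s : seq R) (g : nat -> nat) : nat :=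
  size (undup [seq g i | i <- iota 0 (size s)]).

Definition sole {R : realFieldType} (s : seq R) (g : nat -> nat) (i : nat) : Prop :=
  forall i', (i' < size s)%N -> i' != i -> g i' != g i.

Definition class1 {R : realFieldType} (s : seq R) (i : nat) : bool :=
  (2%:R)^-1 < nth 0 s i.

Definition upd (f : nat -> nat) (i b : nat) : nat -> nat :=
  fun j => if j == i then b else f j.

(* The main loop of MM_k on an already sorted input.  Remaining items are the
   indices lo..hi-1 (head = lo is the largest, tail = hi-1 the smallest);
   b is the index of the open bin, c the number of items in it, S its load. *)
Fixpoint mm_loop {R : realFieldType} (k : nat) (a : nat -> R)
    (fuel lo hi b c : nat) (S : R) (f : nat -> nat) : nat -> nat :=
  match fuel with
  | 0 => f
  | fuel'.+1 =>
    if (lo < hi)%N then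
      if c == k then mm_loop k a fuel' lo hi b.+1 0 0 f
      else if S + a lo <= 1 then
        mm_loop k a fuel' lo.+1 hi b c.+1 (S + a lo) (upd f lo b)
      else if S + a hi.-1 <= 1 then
        mm_loop k a fuel' lo hi.-1 b c.+1 (S + a hi.-1) (upd f hi.-1 b)
      else mm_loop k a fuel' lo hi b.+1 0 0 f
    else f
  end.

(* MM_k on a sorted input (sorting leaves it unchanged).  The fuel 2n+1 is
   enough for k >= 1: every bin-closing step is followed by a packing step. *)
Definition MM {R : realFieldType} (k : nat) (s : seq R) : nat -> nat :=
  mm_loop k (fun i => nth 0 s i) (2 * size s).+1 0 (size s) 0 0 0 (fun _ => 0%N).

Definition in_I1 {R : realFieldType} (s : seq R) (i : nat) : Prop :=
  [/\ (i < size s)%N, class1 s i & sole s (MM 2 s) i].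

(* Main.v *)
Require Import Defs.
From HB Require Import structures.
From mathcomp Require Import all_boot all_order all_algebra.
From mathcomp Require Import zify ring lra.
Set Implicit Arguments. Unset Strict Implicit. Unset Printing Implicit Defensive.
Import Order.TTheory GRing.Theory Num.Theory.
Local Open Scope ring_scope.

Lemma mm_persist (R : realFieldType) k (a : nat -> R) fuel lo hi b c (S : R) f y :
  ~~ ((lo <= y) && (y < hi))%N -> mm_loop k a fuel lo hi b c S f y = f y.
Proof.
elim: fuel lo hi b c S f => [|fuel IH] lo hi b c S f hy //=.
case: ifP => hlh //.
case: ifP => _; first exact: IH.
case: ifP => _.
  rewrite IH; last by move: hy; apply: contra => /andP [h1 h2]; apply/andP; lia.
  rewrite /upd; case: eqP => // Ey; exfalso; move: hy; rewrite Ey; apply/negP/negPn/andP; lia.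
case: ifP => _; last exact: IH.
rewrite IH; last by move: hy; apply: contra => /andP [h1 h2]; apply/andP; lia.
rewrite /upd; case: eqP => // Ey; exfalso; move: hy; rewrite Ey; apply/negP/negPn/andP; lia.
Qed.
Lemma mm_P2 (R : realFieldType) (a : nat -> R) (n : nat)
  (ha1 : forall y, (y < n)%N -> a y <= 1)
  (hmono : forall y z, (y <= z)%N -> (z < n)%N -> a z <= a y) fuel lo hi b c (S : R) f :
  (lo <= hi)%N -> (hi <= n)%N -> (c = 0%N -> S = 0) ->
  ((0 < c)%N -> exists2 x, (x < lo)%N & f x = b) ->
  (forall y, (hi <= y)%N -> (y < n)%N -> exists2 x, (x < lo)%N & f x = f y) ->
  (2 * (hi - lo) + (0 < c) < fuel)%N ->
  forall i, (lo <= i)%N -> (i < hi)%N ->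
  (forall i', (i' < n)%N -> i' != i -> mm_loop 2 a fuel lo hi b c S f i' != mm_loop 2 a fuel lo hi b c S f i) ->
  forall y, (i < y)%N -> (y < n)%N -> a i + a y <= 1 ->
  exists2 x, (x < i)%N & mm_loop 2 a fuel lo hi b c S f x = mm_loop 2 a fuel lo hi b c S f y.
Proof.
elim: fuel lo hi b c S f => [|fuel IH] lo hi b c S f Hlh Hhn Hc0 Hcb Htl Hfuel i Hli Hih; first by lia.
simpl mm_loop.
have -> : (lo < hi)%N by lia.
case: eqP => [Ec2|Nc2].
  apply: IH => //; try lia.
case: ifP => Hhd.
  case: (ltnP lo i) => Hli'.
    apply: IH => //; try lia.
    - by move=> _; exists lo => //; rewrite /upd eqxx.
    - move=> y h1 h2; have [x hx fx] := Htl y h1 h2; exists x; first lia.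
      rewrite /upd; have -> : (x == lo) = false by apply/eqP; lia.
      by have -> : (y == lo) = false by apply/eqP; lia.
  have Ei : i = lo by lia.
  subst i.
  set F := mm_loop _ _ _ _ _ _ _ _ _.
  have Flo : F lo = b by rewrite /F mm_persist ?upd /upd ?eqxx //; apply/negP => /andP [h1 h2]; lia.
  have Fo : forall z, ~~ ((lo < z) && (z < hi))%N -> F z = upd f lo b z.
    by move=> z hz; rewrite /F mm_persist.
  move=> Hs y Hy Hyn Hay.
  case: (posnP c) => Hc.
  - have S0 := Hc0 Hc.
    case: (leqP hi y) => Hhy.
      have [x hx fx] := Htl y Hhy Hyn; exists x => //.
      rewrite !Fo; last by apply/negP => /andP [h1 h2]; lia.
      rewrite /upd; have -> : (x == lo) = false by apply/eqP; lia.
      by have -> : (y == lo) = false by apply/eqP; lia.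
      by apply/negP => /andP [h1 h2]; lia.
    exfalso.
    move: Hs Flo Fo; rewrite /F {F}.
    case: fuel IH Hfuel => [|fuel] IH Hfuel; first by lia.
    simpl mm_loop.
    have -> : (lo.+1 < hi)%N by lia.
    rewrite Hc /=.
    case: ifP => H2.
      move=> Hs _ _; move: (Hs lo.+1).
      rewrite !mm_persist; last 2 first.
        by apply/negP => /andP [h1 h2]; lia.
        by apply/negP => /andP [h1 h2]; lia.
      rewrite /upd eqxx; have -> : (lo == lo.+1) = false by apply/eqP; lia.
      move=> H; have := H ltac:(lia) ltac:(lia); by rewrite !eqxx.
    case: ifP => H3.
      move=> Hs _ _; move: (Hs hi.-1).
      rewrite !mm_persist; last 2 first.
        by apply/negP => /andP [h1 h2]; lia.
        by apply/negP => /andP [h1 h2]; lia.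
      rewrite /upd eqxx; have -> : (lo == hi.-1) = false by apply/eqP; lia.
      move=> H; have := H ltac:(lia) ltac:(lia); by rewrite !eqxx.
    move=> _ _ _.
    have := hmono y hi.-1 ltac:(lia) ltac:(lia).
    move: H3 Hay; rewrite S0 add0r => /negbT; rewrite -ltNge => H3 Hay Hm.
    lra.
  - exfalso; have [x hx fx] := Hcb Hc.
    move: (Hs x); rewrite Flo Fo; last by apply/negP => /andP [h1 h2]; lia.
    rewrite /upd; have -> : (x == lo) = false by apply/eqP; lia.
    rewrite fx => H; have := H ltac:(lia) ltac:(lia); by rewrite !eqxx.
have Hcp : (0 < c)%N.
  case: (posnP c) => // Hc; move: Hhd; rewrite (Hc0 Hc) add0r ha1 //; lia.
have [x hx fx] := Hcb Hcp.
case: ifP => Htf.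
  case: (ltnP i hi.-1) => Hih'.
    apply: IH => //; try lia.
    - by move=> _; exists x => //; rewrite /upd; have -> : (x == hi.-1) = false by apply/eqP; lia.
    - move=> y h1 h2; case: (ltnP y hi) => h3.
        have Ey : y = hi.-1 by lia.
        subst y; exists x => //; rewrite /upd eqxx; have -> : (x == hi.-1) = false by apply/eqP; lia.
        by [].
      have [x' hx' fx'] := Htl y h3 h2; exists x' => //.
      rewrite /upd; have -> : (x' == hi.-1) = false by apply/eqP; lia.
      by have -> : (y == hi.-1) = false by apply/eqP; lia.
  have Ei : i = hi.-1 by lia.
  subst i => Hs; exfalso.
  move: (Hs x).
  rewrite !mm_persist; last 2 first.
    by apply/negP => /andP [h1 h2]; lia.
    by apply/negP => /andP [h1 h2]; lia.
  rewrite /upd eqxx; have -> : (x == hi.-1) = false by apply/eqP; lia.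
  rewrite fx => H; have := H ltac:(lia) ltac:(lia); by rewrite !eqxx.
apply: IH => //; try lia.
Qed.
Record inv2 (R : realFieldType) (a : nat -> R) (pk : nat -> bool) (b c : nat) (S : R) (f : nat -> nat) : Prop := Inv2 {
  iv_c : (c <= 2)%N;
  iv_le : forall y, pk y -> (f y <= b)%N;
  iv_c0 : c = 0%N -> S = 0 /\ (forall y, pk y -> f y != b);
  iv_c1 : c = 1%N -> exists x, [/\ pk x, f x = b, S = a x & forall y, pk y -> f y = b -> y = x];
  iv_pair : forall x y, pk x -> pk y -> x != y -> f x = f y -> a x + a y <= 1;
  iv_tri : forall x y z, pk x -> pk y -> pk z -> x != y -> y != z -> x != z -> f x = f y -> f y = f z -> False }.

Lemma inv2_close (R : realFieldType) (a : nat -> R) pk b c S f :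
  inv2 a pk b c S f -> inv2 a pk b.+1 0 0 f.
Proof.
case=> h1 h2 h3 h4 h5 h6; constructor => //.
- by move=> y /h2 ?; lia.
- by split => // y /h2 ?; apply/eqP; lia.
Qed.

Lemma inv2_ext (R : realFieldType) (a : nat -> R) pk pk' b c S f :
  (forall y, pk y = pk' y) -> inv2 a pk b c S f -> inv2 a pk' b c S f.
Proof.
move=> E; case=> h1 h2 h3 h4 h5 h6; constructor => //.
- by move=> y; rewrite -E; apply: h2.
- by move=> /h3 [-> H]; split => // y; rewrite -E; apply: H.
- move=> /h4 [x [p1 p2 p3 p4]]; exists x; split => //; first by rewrite -E.
  by move=> y; rewrite -E; apply: p4.
- by move=> x y; rewrite -!E; apply: h5.
- by move=> x y z; rewrite -!E; apply: h6.
Qed.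

Lemma inv2_pack (R : realFieldType) (a : nat -> R) pk pk' b c S f j :
  inv2 a pk b c S f -> c != 2%N -> S + a j <= 1 -> ~~ pk j ->
  (forall y, pk' y = (y == j) || pk y) ->
  inv2 a pk' b c.+1 (S + a j) (upd f j b).
Proof.
move=> [h1 h2 h3 h4 h5 h6] Hc HS Hj E.
have updj : upd f j b j = b by rewrite /upd eqxx.
have updo : forall y, pk y -> upd f j b y = f y.
  by move=> y py; rewrite /upd; case: eqP => // Ey; move: Hj; rewrite -Ey py.
constructor.
- lia.
- move=> y; rewrite E; case/orP => [/eqP -> | py]; first by rewrite updj.
  by rewrite updo //; apply: h2.
- by [].
- case=> Ec; subst c.
  have [S0 H0] := h3 erefl.
  exists j; split; first by rewrite E eqxx.
  + exact: updj.
  + by rewrite S0 add0r.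
  + move=> y; rewrite E; case/orP => [/eqP -> // | py].
    by rewrite updo // => fy; move: (H0 y py); rewrite fy eqxx.
-
  have key : forall y, pk y -> f y = b -> a j + a y <= 1.
    move=> y py fy.
    case: (posnP c) => Hc0.
      by move: ((h3 Hc0).2 y py); rewrite fy eqxx.
    have Ec1 : c = 1%N by move: h1 Hc Hc0; lia.
    have [x [px fx Sx ux]] := h4 Ec1.
    have Eyx := ux y py fy; subst y.
    by rewrite addrC -Sx.
  move=> x y; rewrite !E => /orP [/eqP -> | px] /orP [/eqP -> | py]; first by rewrite eqxx.
  + move=> _; rewrite updj updo // => fy; exact: key.
  + move=> _; rewrite updj updo // => fx; rewrite addrC; exact: key.
  + rewrite !updo //; exact: h5.
-
  have key : forall y z, pk y -> pk z -> y != z -> f y = b -> f z = b -> False.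
    move=> y z py pz yz fy fz.
    case: (posnP c) => Hc0.
      by move: ((h3 Hc0).2 y py); rewrite fy eqxx.
    have Ec1 : c = 1%N by move: h1 Hc Hc0; lia.
    have [x [px fx Sx ux]] := h4 Ec1.
    by move: yz; rewrite (ux y py fy) (ux z pz fz) eqxx.
  move=> x y z; rewrite !E.
  move=> /orP [/eqP -> | px] /orP [/eqP -> | py] /orP [/eqP -> | pz];
    rewrite ?eqxx // ?updj ?updo //. 
  + move=> _ yz _ fy fz; apply: (key y z py pz yz) => //; by rewrite -fz -fy.
  + move=> xj _ xz fx fz; apply: (key x z px pz xz) => //.
  + move=> xy _ _ fxy fy; apply: (key x y px py xy) => //; by rewrite fxy.
  + exact: h6.
Qed.

Definition pkd (n lo hi : nat) := fun y => (y < n)%N && ((y < lo)%N || (hi <= y)%N).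

Lemma mm_P1 (R : realFieldType) (a : nat -> R) (n : nat)
  (ha1 : forall y, (y < n)%N -> a y <= 1) fuel lo hi b c (S : R) f :
  (lo <= hi)%N -> (hi <= n)%N -> inv2 a (pkd n lo hi) b c S f ->
  (2 * (hi - lo) + (0 < c) < fuel)%N ->
  exists b' c' S', inv2 a (fun y => (y < n)%N) b' c' S' (mm_loop 2 a fuel lo hi b c S f).
Proof.
elim: fuel lo hi b c S f => [|fuel IH] lo hi b c S f Hlh Hhn Hi Hfuel; first by lia.
simpl mm_loop.
case: ifP => Hlt; last first.
  exists b, c, S; apply: inv2_ext Hi => y; rewrite /pkd; lia.
have Hc0 : c = 0%N -> S = 0 := fun h => (iv_c0 Hi h).1.
case: eqP => [Ec2|Nc2].
  apply: IH => //; first exact: inv2_close Hi.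
  lia.
case: ifP => Hhd.
  apply: IH => //; try lia.
  apply: (inv2_pack Hi) => //.
  - by apply/eqP.
  - by rewrite /pkd; lia.
  - by move=> y; rewrite /pkd; lia.
have Hcp : (0 < c)%N.
  case: (posnP c) => // Hc; move: Hhd; rewrite (Hc0 Hc) add0r ha1 //; lia.
case: ifP => Htf.
  apply: IH => //; try lia.
  apply: (inv2_pack Hi) => //.
  - by apply/eqP.
  - by rewrite /pkd; lia.
  - by move=> y; rewrite /pkd; lia.
apply: IH => //; first exact: inv2_close Hi.
lia.
Qed.
Lemma sum_pick (R : realFieldType) (a : nat -> R) n x :
  \sum_(i < n) (if (i : nat) == x then a i else 0) = if (x < n)%N then a x else 0.
Proof.
elim: n => [|n IH]; first by rewrite big_ord0.
rewrite big_ord_recr /= IH.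
case: eqP => [Enx|Nnx].
  by subst x; rewrite ltnSn ltnn add0r.
rewrite addr0; case: (ltnP x n) => h.
  by have -> : (x < n.+1)%N by lia.
by have -> : (x < n.+1)%N = false by lia.
Qed.

Lemma sum_le2 (R : realFieldType) (a : nat -> R) n (P : pred 'I_n) x z :
  (forall y, 0 <= a y) -> x != z ->
  (forall y : 'I_n, P y -> (y : nat) = x \/ (y : nat) = z) ->
  \sum_(y < n | P y) a y <= a x + a z.
Proof.
move=> a0 xz HP.
rewrite big_mkcond /=.
apply: (@le_trans _ _ (\sum_(y < n) ((if (y : nat) == x then a y else 0) + (if (y : nat) == z then a y else 0)))).
  apply: ler_sum => y _.
  case: ifP => Py; last by case: eqP; case: eqP => *; rewrite ?addr0 ?add0r ?a0 ?addr_ge0.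
  case: (HP y Py) => ->; rewrite eqxx.
    by rewrite (negbTE xz) addr0.
  by rewrite eq_sym (negbTE xz) add0r.
rewrite big_split /= !sum_pick.
by apply: lerD; case: ifP.
Qed.

Lemma sum_le1 (R : realFieldType) (a : nat -> R) n (P : pred 'I_n) x :
  (forall y, 0 <= a y) ->
  (forall y : 'I_n, P y -> (y : nat) = x) ->
  \sum_(y < n | P y) a y <= a x.
Proof.
move=> a0 HP.
rewrite big_mkcond /=.
apply: (@le_trans _ _ (\sum_(y < n) (if (y : nat) == x then a y else 0))).
  apply: ler_sum => y _.
  case: ifP => Py; last by case: eqP.
  by rewrite (HP y Py) eqxx.
by rewrite sum_pick; case: ifP.
Qed.

Lemma asg_pair (R : realFieldType) (a : nat -> R) n (g : nat -> nat) x y :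
  (forall y, 0 <= a y) ->
  (forall j, \sum_(i < n | g i == j) a i <= 1) ->
  (x < n)%N -> (y < n)%N -> x != y -> g x = g y -> a x + a y <= 1.
Proof.
move=> a0 Hg hx hy xy gxy.
apply: le_trans (Hg (g x)).
rewrite (bigD1 (Ordinal hx)) ?eqxx //=.
rewrite (bigD1 (Ordinal hy)) /=; last first.
  by rewrite gxy eqxx /=; apply/eqP => -[]; apply/eqP; rewrite eq_sym.
rewrite addrA lerDl; apply: sumr_ge0 => *; exact: a0.
Qed.

Lemma core (R : realFieldType) (n : nat) (a : nat -> R) (F g : nat -> nat) (i : nat) :
  (forall y, 0 <= a y) -> (forall y, a y <= 1) ->
  (forall x y, (x <= y)%N -> (y < n)%N -> a y <= a x) ->
  (i < n)%N -> (2%:R)^-1 < a i ->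
  (forall x y, (x < n)%N -> (y < n)%N -> x != y -> F x = F y -> a x + a y <= 1) ->
  (forall x y z, (x < n)%N -> (y < n)%N -> (z < n)%N -> x != y -> y != z -> x != z ->
     F x = F y -> F y = F z -> False) ->
  (forall y, (i < y)%N -> (y < n)%N -> a i + a y <= 1 -> exists2 x, (x < i)%N & F x = F y) ->
  (forall j, \sum_(y < n | g y == j) a y <= 1) ->
  exists g' : nat -> nat,
    [/\ forall j, \sum_(y < n | g' y == j) a y <= 1,
        size (undup [seq g' y | y <- iota 0 n]) = size (undup [seq g y | y <- iota 0 n]) &
        forall i', (i' <= i)%N -> (forall y, (y < n)%N -> y != i' -> F y != F i') ->
          forall y, (y < n)%N -> y != i' -> g' y != g' i'].
Proof.
move=> a0 ha1 hmono hin hi12 P1 P3 P2 Hg.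
have half : 1 = (2%:R)^-1 + (2%:R)^-1 :> R.
  by field.
have K0 : forall x x', (x <= i)%N -> (x' <= i)%N -> g x = g x' -> x = x'.
  move=> x x' hx hx' gxx'; apply/eqP; apply/negPn/negP => xx'.
  have := @asg_pair _ a n g x x' a0 Hg ltac:(lia) ltac:(lia) xx' gxx'.
  have := hmono x i hx hin; have := hmono x' i hx' hin; lra.
pose xof y := find (fun x => F x == F y) (iota 0 i.+1).
pose inU y := [&& (i < y)%N, (y < n)%N & has (fun x => g x == g y) (iota 0 i.+1)].
have K1 : forall y, inU y -> (xof y <= i)%N /\ F (xof y) = F y.
  move=> y /and3P [h1 h2 /hasP [x]]; rewrite mem_iota => /andP [_ hx] /eqP gxy.
  have hax := @asg_pair _ a n g x y a0 Hg ltac:(lia) h2 ltac:(apply/eqP; lia) gxy.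
  have := hmono x i ltac:(lia) hin => hai.
  have [x' hx' Fx'] := P2 y h1 h2 ltac:(lra).
  have hh : has (fun x => F x == F y) (iota 0 i.+1).
    by apply/hasP; exists x'; [rewrite mem_iota; lia | apply/eqP].
  have := nth_find 0 hh; rewrite has_find size_iota in hh.
  rewrite nth_iota // => /eqP; split => //; rewrite /xof; lia.
pose g' y := if (y <= i)%N then g y else if inU y then g (xof y) else g y.
exists g'; split.
- move=> j.
  case: (boolP (has (fun x => g x == j) (iota 0 i.+1))) => [/hasP [x] | nh].
    rewrite mem_iota => /andP [_ hx] /eqP gxj; subst j.
    case: (boolP (has (fun z => inU z && (xof z == x)) (iota 0 n))) => [/hasP [z] | nz].
      rewrite mem_iota => /andP [_ hz] /andP [Uz /eqP xz].
      have [_ Fz] := K1 z Uz; rewrite xz in Fz.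
      have zi : (i < z)%N by case/and3P: Uz.
      have xz' : x != z by apply/eqP; lia.
      have Hxz : a x + a z <= 1 by apply: P1 => //; lia.
      apply: le_trans Hxz; apply: sum_le2 => // y; rewrite /g'; case: ifP => hyi.
        by move=> /eqP /K0 -> //; left.
      case: ifP => Uy.
        have [hxy Fy] := K1 y Uy.
        move=> /eqP gyx; have Exy := K0 _ _ hxy hx gyx; rewrite Exy in Fy; right.
        apply/eqP; apply/negPn/negP => yz.
        have yi : (i < y)%N by lia.
        apply: (P3 x y z) => //; try lia.
      move=> /eqP gyx; exfalso; suff : inU y by rewrite Uy.
      apply/and3P; split; [by rewrite ltnNge hyi | exact: ltn_ord |].
      by apply/hasP; exists x; [rewrite mem_iota; lia | rewrite gyx].
    apply: le_trans (ha1 x); apply: sum_le1 => // y; rewrite /g'; case: ifP => hyi.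
      by move=> /eqP /K0 -> //.
    case: ifP => Uy.
      move=> /eqP gyx; have [hxy Fy] := K1 y Uy; have Exy := K0 _ _ hxy hx gyx.
      exfalso; move/negP: nz; apply; apply/hasP; exists (nat_of_ord y).
        by rewrite mem_iota /=; exact: ltn_ord.
      by rewrite Uy Exy eqxx.
    move=> /eqP gyx; exfalso; suff : inU y by rewrite Uy.
    apply/and3P; split; [by rewrite ltnNge hyi | exact: ltn_ord |].
    by apply/hasP; exists x; [rewrite mem_iota; lia | rewrite gyx].
  apply: le_trans (Hg j); rewrite le_eqVlt; apply/orP; left; apply/eqP.
  apply: eq_bigl => y; rewrite /g'; case: ifP => hyi //; case: ifP => Uy //.
  have [hxy Fy] := K1 y Uy.
  have -> : (g (xof y) == j) = false.
    apply/negP => /eqP E; move/negP: nh; apply; apply/hasP; exists (xof y).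
      by rewrite mem_iota; lia.
    by rewrite E.
  apply/esym/negP => /eqP E; move/negP: nh; apply.
  case/and3P: Uy => _ _ /hasP [x hx /eqP gx]; apply/hasP; exists x => //.
  by rewrite gx E.
- apply: perm_size; apply: uniq_perm; try exact: undup_uniq.
  move=> L; rewrite !mem_undup; apply/mapP/mapP => [[y hy ->]|[y hy ->]].
    rewrite /g'; case: ifP => hyi; first by exists y.
    case: ifP => Uy; last by exists y.
    have [hxy _] := K1 y Uy; exists (xof y) => //.
    by rewrite mem_iota; lia.
  case: (boolP (y <= i)%N) => hyi; first by exists y => //; rewrite /g' hyi.
  case: (boolP (inU y)) => Uy; last by exists y => //; rewrite /g' (negbTE hyi) (negbTE Uy).
  have Uy' := Uy.
  case/and3P: Uy' => _ _ /hasP [x]; rewrite mem_iota => /andP [_ hx] /eqP gx.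
  exists x; first by rewrite mem_iota; lia.
  by rewrite /g'; have -> : (x <= i)%N by lia.
- move=> i' hi' Hs y hy yi'.
  have -> : g' i' = g i' by rewrite /g' hi'.
  rewrite /g'; case: ifP => hyi.
    by apply/eqP => /K0 E; move/eqP: yi'; apply; apply: E.
  case: ifP => Uy.
    apply/eqP => E; have [h1 h2] := K1 y Uy; have Ex := K0 _ _ h1 hi' E.
    by move: (Hs y hy yi'); rewrite -h2 Ex eqxx.
  apply/eqP => E; suff : inU y by rewrite Uy.
  apply/and3P; split; [by rewrite ltnNge hyi | by [] |].
  by apply/hasP; exists i'; [rewrite mem_iota; lia | rewrite E].
Qed.

Unset Implicit Arguments.
Theorem lemma2 (R : realFieldType) (s : seq R) :
  items_ok s -> sorted_items s ->
  forall g : nat -> nat, is_assignment s g ->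
  exists g' : nat -> nat,
    [/\ is_assignment s g', nbins s g' = nbins s g &
        forall i, in_I1 s i -> sole s g' i].
Proof.
move=> Hok Hsort g Hg.
pose n := size s.
pose a := fun y => nth 0 s y.
have Hit : forall y, (y < n)%N -> 0 < a y <= 1 by move=> y hy; exact: (all_nthP 0 Hok).
have a0 : forall y, 0 <= a y.
  move=> y; case: (ltnP y n) => hy; first by case/andP: (Hit y hy) => /ltW.
  by rewrite /a nth_default.
have ha1 : forall y, a y <= 1.
  move=> y; case: (ltnP y n) => hy; first by case/andP: (Hit y hy).
  by rewrite /a nth_default.
have hmono : forall x y, (x <= y)%N -> (y < n)%N -> a y <= a x.
  move=> x y hxy hy.
  have tr : transitive (fun x y : R => y <= x) by move=> u v w /= h1 h2; apply: le_trans h2 h1.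
  have rf : reflexive (fun x y : R => y <= x) by move=> u /=.
  have hx : x \in [pred m | (m < size s)%N] by rewrite inE /=; rewrite /n in hy; lia.
  have hy' : y \in [pred m | (m < size s)%N] by rewrite inE /=.
  exact: (sorted_leq_nth tr rf 0 Hsort x y hx hy' hxy).
pose F := MM 2 s.
have [b' [c' [S' Hinv]]] :
  exists b' c' S', inv2 a (fun y => (y < n)%N) b' c' S' F.
  apply: (@mm_P1 R a n (fun y _ => ha1 y)) => //; last by rewrite subn0; lia.
  constructor => //; rewrite /pkd /n.
  - by move=> _; split => // y /andP [h1 h2]; lia.
  - by move=> x y /andP [h1 h2]; lia.
  - by move=> x y z /andP [h1 h2]; lia.
have P1 := iv_pair Hinv.
have P3 := iv_tri Hinv.
pose I1b j := [&& (j < n)%N, class1 s j & all (fun i' => (i' == j) || (F i' != F j)) (iota 0 n)].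
have I1E : forall j, in_I1 s j -> I1b j.
  move=> j [h1 h2 h3]; apply/and3P; split => //.
  apply/allP => i'; rewrite mem_iota => /andP [_ hi'].
  by case: eqP => //= /eqP ne; apply: h3.
case: (boolP (has I1b (iota 0 n))) => [/hasP [j0 _ Hj0] | nh]; last first.
  exists g; split => // i' /I1E Hi'; exfalso; move/hasP: nh; apply; exists i' => //.
  by case/and3P: Hi' => h _ _; rewrite mem_iota.
have ubP : forall j, I1b j -> (j <= n)%N by move=> j /and3P [h _ _]; lia.
case: (ex_maxnP (ex_intro _ j0 Hj0) ubP) => i Hi maxi.
case/and3P: Hi => hin hcl /allP hsole.
have HsF : forall j, (j < n)%N -> j != i -> F j != F i.
  move=> j hj ji; have := hsole j; rewrite mem_iota /= => /(_ ltac:(lia)).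
  by rewrite (negbTE ji).
have P2 : forall y, (i < y)%N -> (y < n)%N -> a i + a y <= 1 -> exists2 x, (x < i)%N & F x = F y.
  move=> y h1 h2 h3.
  apply: (@mm_P2 R a n (fun y _ => ha1 y) hmono _ 0 n 0 0 0 (fun _ => 0%N)) => //.
  - by move=> y' h h'; lia.
  - rewrite subn0; lia.
have [g' [H1 H2 H3]] := @core R n a F g i a0 ha1 hmono hin hcl
  (fun x y hx hy => P1 x y hx hy) (fun x y z hx hy hz => P3 x y z hx hy hz) P2 Hg.
exists g'; split => //.
move=> i' Hi'; have hi' := maxi i' (I1E i' Hi').
case: Hi' => _ _ Hs.
by move=> y hy yi'; apply: H3.
Qed.
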